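(* The horizontal monoidal category $H(\mathsf{sInst})$ of the double category of simplicial instruments can be identified with the monoidal category $(\mathsf{Chan},\otimes,\mathbb C)$ of finite-dimensional Hilbert spaces and channels, via the identification of simplicial instruments $\Delta^0\to\mathcal{CP}_{V,W}(\Delta^0)$ with channels $V\to W$; and the vertical monoidal category $V(\mathsf{sInst})$ can be identified with the Kleisli category $\mathsf{sSet}_D$ of the levelwise distribution monad on simplicial sets (with monoidal product given on objects by the product of simplicial sets), via the identification $\mathcal{CP}_{\mathbb C,\mathbb C}(Y)\cong D(Y)$ induced by $\operatorname{CP}(\mathbb C,\mathbb C)\cong\mathbb R_{\ge0}$.
   Context: All Hilbert spaces are finite-dimensional; $\operatorname{CP}(V,W)$ denotes completely positive maps $L(V)\to L(W)$ and channels are trace-preserving ones. For a set $S$, $\mathcal{CP}_{V,W}(S)$ is the set of finitely supported $\Phi:S\to\operatorname{CP}(V,W)$ with $\sum_s\Phi^s$ a channel, functorial in $S$ by $(f_*\Phi)^t=\sum_{f(s)=t}\Phi^s$; it is extended levelwise to simplicial sets. A simplicial instrument is a simplicial map $\Phi:X\to\mathcal{CP}_{V,W}(Y)$. The double category $\mathsf{sInst}$ has one object, vertical morphisms Hilbert spaces, horizontal morphisms simplicial sets, and squares (with horizontal boundaries $X$ above, $Y$ below, vertical boundaries $V$, $W$) the simplicial instruments $X\to\mathcal{CP}_{V,W}(Y)$. Horizontal composition: for $\Phi:X_1\to\mathcal{CP}_{V,W}(Y_1)$, $\Psi:X_2\to\mathcal{CP}_{W,U}(Y_2)$, $(\Psi\circ\Phi)_{(x_1,x_2)}^{(y_1,y_2)}=\Psi_{x_2}^{y_2}\circ\Phi_{x_1}^{y_1}$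 on $X_1\times X_2\to\mathcal{CP}_{V,U}(Y_1\times Y_2)$. Vertical composition: for $\Phi:X\to\mathcal{CP}_{V_1,W_1}(Y)$, $\Psi:Y\to\mathcal{CP}_{V_2,W_2}(Z)$, $(\Psi\bullet\Phi)_x^z=\sum_{y\in Y_n}\Phi_x^y\otimes\Psi_y^z$. The horizontal identity is the terminal simplicial set $\Delta^0$ (one simplex in each degree), and the vertical identity is $\mathbb C$. The horizontal monoidal category $H(\mathsf{sInst})$ has objects the Hilbert spaces, morphisms $V\to W$ the squares with both horizontal boundaries $\Delta^0$, composition by horizontal composition and tensor product by vertical composition. The vertical monoidal category $V(\mathsf{sInst})$ has objects simplicial sets, morphisms $X\to Y$ the squares with both vertical boundaries $\mathbb C$, composition by vertical composition and tensor product by horizontal composition. $D$ is the distribution monad ($D(S)$ = finitely supported probability distributions on $S$) applied levelwise to simplicial sets; $\mathsf{sSet}_D$ is its Kleisli category, with objects simplicial sets and morphisms simplicial maps $X\to D(Y)$. *)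

(* Defs.v *)
From HB Require Import structures.
From mathcomp Require Import all_boot all_order all_algebra.
From mathcomp Require Import functions.
From mathcomp Require Import complex.
From mathcomp Require Import reals.
From Stdlib Require Import ClassicalEpsilon.

Set Implicit Arguments.
Unset Strict Implicit.
Unset Printing Implicit Defensive.

Import Order.TTheory GRing.Theory Num.Theory.
Local Open Scope ring_scope.

Section FinSupp.
Variables (S : eqType) (V : nmodType).

Definition supp_list (F : S -> V) (r : seq S) :=
  uniq r /\ forall s, s \notin r -> F s = 0.

Definition finsupp (F : S -> V) := exists r, supp_list F r.

(* sum of a finitely supported family (junk value if F is not
   finitely supported) *)
Definition fsum (F : S -> V) : V :=
  \sum_(s <- epsilon (inhabits [::]) (supp_list F)) F s.

End FinSupp.

Definition push (S T : eqType) (V : nmodType) (f : S -> T) (F : S -> V) : T -> V :=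
  fun t => fsum (fun s => if f s == t then F s else 0).

(* Simplicial sets.  Faces d_i : X_{n+1} -> X_n (i <= n+1) and          *)
(* degeneracies s_i : X_n -> X_{n+1} (i <= n); out-of-range indices     *)
(* are unconstrained junk.                                              *)
Record sSet := SSet {
  lvl :> nat -> eqType;
  face : forall n, nat -> lvl n.+1 -> lvl n;
  degen : forall n, nat -> lvl n -> lvl n.+1;
  face_face : forall n i j (x : lvl n.+2), (i < j)%N -> (j <= n.+2)%N ->
    face i (face j x) = face j.-1 (face i x);
  face_degen_lt : forall n i j (x : lvl n.+1), (i < j)%N -> (j <= n.+1)%N ->
    face i (degen j x) = degen j.-1 (face i x);
  face_degen_eq : forall n j (x : lvl n), (j <= n)%N ->
    face j (degen j x) = x;
  face_degen_eqS : forall n j (x : lvl n), (j <= n)%N ->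
    face j.+1 (degen j x) = x;
  face_degen_gt : forall n i j (x : lvl n.+1), (j.+1 < i)%N -> (i <= n.+2)%N ->
    face i (degen j x) = degen j (face i.-1 x);
  degen_degen : forall n i j (x : lvl n), (i <= j)%N -> (j <= n)%N ->
    degen i (degen j x) = degen j.+1 (degen i x)
}.
Arguments face : clear implicits.
Arguments degen : clear implicits.

Definition Delta0 : sSet :=
  @SSet (fun _ => unit) (fun _ _ _ => tt) (fun _ _ _ => tt)
    (fun _ _ _ _ _ _ => erefl) (fun _ _ _ _ _ _ => erefl)
    (fun _ _ x _ => match x with tt => erefl end)
    (fun _ _ x _ => match x with tt => erefl end)
    (fun _ _ _ _ _ _ => erefl) (fun _ _ _ _ _ _ => erefl).

Section Prod.
Variables X Y : sSet.
Definition prod_lvl (n : nat) : eqType := (X n * Y n)%type.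
Definition prod_face n i (x : prod_lvl n.+1) : prod_lvl n :=
  (face X n i x.1, face Y n i x.2).
Definition prod_degen n i (x : prod_lvl n) : prod_lvl n.+1 :=
  (degen X n i x.1, degen Y n i x.2).
Definition sProd : sSet.
Proof.
refine (@SSet prod_lvl prod_face prod_degen _ _ _ _ _ _).
- move=> n i j x H1 H2; congr pair; exact: face_face.
- move=> n i j x H1 H2; congr pair; exact: face_degen_lt.
- move=> n j [x y] H; congr pair; exact: face_degen_eq.
- move=> n j [x y] H; congr pair; exact: face_degen_eqS.
- move=> n i j x H1 H2; congr pair; exact: face_degen_gt.
- move=> n i j x H1 H2; congr pair; exact: degen_degen.
Defined.
End Prod.

(* families indexed by simplices: Phi n x y = Phi_x^y for x in X_n, y in Y_n *)
Definition sfam (V : Type) (X Y : sSet) := forall n, X n -> Y n -> V.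

(* Phi : X -> "levelwise finitely supported V-valued families on Y" is a
   simplicial map (the structure maps of the target act by pushforward) *)
Definition simplicial_fam (V : nmodType) (X Y : sSet) (Phi : sfam V X Y) :=
  [/\ forall n (x : X n), finsupp (Phi n x),
      forall n i (x : X n.+1), (i <= n.+1)%N ->
        Phi n (face X n i x) = push (face Y n i) (Phi n.+1 x) &
      forall n i (x : X n), (i <= n)%N ->
        Phi n.+1 (degen X n i x) = push (degen Y n i) (Phi n x)].

(* Finite-dimensional Hilbert spaces (given by an orthonormal basis     *)
(* indexed by a finite type I), operators, CP maps and channels.        *)
Notation Lop C I := (I -> I -> C).

Section Quantum.
Variable C : numClosedFieldType.
Local Notation L I := (Lop C I).

Definition trace (I : finType) (A : L I) : C := \sum_i A i i.

Definition psd (I : finType) (A : L I) :=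
  forall v : I -> C, 0 <= \sum_i \sum_j (v i)^* * A i j * v j.

Definition lin_op (I J : finType) (f : L I -> L J) :=
  forall (a : C) (X Y : L I),
    f (fun i j => a * X i j + Y i j) = (fun i j => a * f X i j + f Y i j).

Definition unit_op (I : finType) (a b : I) : L I :=
  fun k l => ((k == a) && (l == b))%:R.

Definition block (I J : finType) (X : L (I * J)%type) (a b : I) : L J :=
  fun k l => X (a, k) (b, l).

Definition kron (I J : finType) (A : L I) (B : L J) : L (I * J)%type :=
  fun p q => A p.1 q.1 * B p.2 q.2.

(* tensor product f (x) g of linear maps, (f (x) g)(A (x) B) = f A (x) g B *)
Definition tens_map (I I' J J' : finType) (f : L I -> L I') (g : L J -> L J') :
  L (I * J)%type -> L (I' * J')%type :=
  fun X p q => \sum_(a : I) \sum_(b : I) kron (f (unit_op a b)) (g (block X a b)) p q.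

Definition is_cp (I J : finType) (f : L I -> L J) :=
  lin_op f /\
  forall (k : nat) (X : L ('I_k * I)%type), psd X ->
    psd (tens_map (fun Y : L 'I_k => Y) f X).

Definition is_channel (I J : finType) (f : L I -> L J) :=
  is_cp f /\ forall X, trace (f X) = trace X.

Definition sinstr (V W : finType) (X Y : sSet) (Phi : sfam (L V -> L W) X Y) :=
  [/\ simplicial_fam Phi,
      forall n x y, is_cp (Phi n x y) &
      forall n (x : X n), is_channel (fsum (Phi n x))].

Definition hcomp (V W U : finType) (X1 Y1 X2 Y2 : sSet)
  (Phi : sfam (L V -> L W) X1 Y1) (Psi : sfam (L W -> L U) X2 Y2) :
  sfam (L V -> L U) (sProd X1 X2) (sProd Y1 Y2) :=
  fun n x y => Psi n x.2 y.2 \o Phi n x.1 y.1.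

Definition vcomp (V1 W1 V2 W2 : finType) (X Y Z : sSet)
  (Phi : sfam (L V1 -> L W1) X Y) (Psi : sfam (L V2 -> L W2) Y Z) :
  sfam (L (V1 * V2)%type -> L (W1 * W2)%type) X Z :=
  fun n x z => fsum (fun y => tens_map (Phi n x y) (Psi n y z)).

Definition const_sq (V W : finType) (f : L V -> L W) : sfam (L V -> L W) Delta0 Delta0 :=
  fun _ _ _ => f.

(* the identification of a square with horizontal boundaries Delta^0
   (resp. Delta^0 x Delta^0) with a map V -> W *)
Definition ev (V W : finType) (Phi : sfam (L V -> L W) Delta0 Delta0) : L V -> L W :=
  Phi 0%N tt tt.
Definition ev2 (V W : finType)
  (Phi : sfam (L V -> L W) (sProd Delta0 Delta0) (sProd Delta0 Delta0)) : L V -> L W :=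
  Phi 0%N (tt, tt) (tt, tt).

(* vertical identity square on a simplicial set X (vertical boundaries C) *)
Definition vid (X : sSet) : sfam (L unit -> L unit) X X :=
  fun n x y => if x == y then id else (fun _ _ _ => 0).

End Quantum.

Section Kleisli.
Variable R : realType.

Definition kmap (X Y : sSet) (p : sfam R X Y) :=
  [/\ simplicial_fam p,
      forall n x y, 0 <= p n x y &
      forall n (x : X n), fsum (p n x) = 1].

Definition kcomp (X Y Z : sSet) (p : sfam R X Y) (q : sfam R Y Z) : sfam R X Z :=
  fun n x z => fsum (fun y => p n x y * q n y z).

Definition kid (X : sSet) : sfam R X X := fun n x y => (x == y)%:R.

Definition ktens (X1 Y1 X2 Y2 : sSet) (p : sfam R X1 Y1) (q : sfam R X2 Y2) :
  sfam R (sProd X1 X2) (sProd Y1 Y2) :=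
  fun n x y => p n x.1 y.1 * q n x.2 y.2.

(* CP_{C,C}(Y) ~= D(Y) induced by CP(C,C) ~= R_{>=0}, Phi |-> Phi(1) *)
Definition toD (X Y : sSet) (Phi : sfam (Lop R[i] unit -> Lop R[i] unit) X Y) : sfam R X Y :=
  fun n x y => @complex.Re R (Phi n x y (fun _ _ => 1) tt tt).

(* same, for vertical boundaries C (x) C *)
Definition toD2 (X Y : sSet)
  (Phi : sfam (Lop R[i] (unit * unit)%type -> Lop R[i] (unit * unit)%type) X Y) : sfam R X Y :=
  fun n x y => @complex.Re R (Phi n x y (fun _ _ => 1) (tt, tt) (tt, tt)).

Definition fromD (X Y : sSet) (p : sfam R X Y) : sfam (Lop R[i] unit -> Lop R[i] unit) X Y :=
  fun n x y => fun A i j => Complex (p n x y) 0 * A i j.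

End Kleisli.

Arguments const_sq {C V W} f n _ _.
Arguments hcomp {C V W U X1 Y1 X2 Y2} Phi Psi n _ _.
Arguments vcomp {C V1 W1 V2 W2 X Y Z} Phi Psi n _ _.
Arguments vid {C} X n _ _.
Arguments kcomp {R X Y Z} p q n _ _.
Arguments kid : clear implicits.
Arguments ktens {R X1 Y1 X2 Y2} p q n _ _.
Arguments toD {R X Y} Phi n _ _.
Arguments toD2 {R X Y} Phi n _ _.
Arguments fromD {R X Y} p n _ _.

(* Main.v *)
Require Import Defs.
From HB Require Import structures.
From mathcomp Require Import all_boot all_order all_algebra.
From mathcomp Require Import functions complex reals.
From Stdlib Require Import FunctionalExtensionality ClassicalEpsilon.

Set Implicit Arguments.
Unset Strict Implicit.
Unset Printing Implicit Defensive.
Import Order.TTheory GRing.Theory Num.Theory.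
Local Open Scope ring_scope.

Section Gen.
Variables (S : eqType) (V : nmodType).

Lemma sum_supp (F : S -> V) r1 t : supp_list F r1 -> uniq t -> {subset r1 <= t} ->
  \sum_(s <- t) F s = \sum_(s <- r1) F s.
Proof.
move=> [u1 z1] ut sub.
rewrite (bigID (fun s => s \in r1)) /= [X in _ + X]big1 ?addr0; last first.
  by move=> s Hs; apply: z1.
rewrite -big_filter; apply: perm_big; apply: uniq_perm.
- exact: filter_uniq.
- exact: u1.
- move=> s; rewrite mem_filter; case H: (s \in r1) => //=; by rewrite sub.
Qed.

Lemma fsumE (F : S -> V) r : supp_list F r -> fsum F = \sum_(s <- r) F s.
Proof.
move=> Hr; rewrite /fsum.
set r' := epsilon _ _.
have Hr' : supp_list F r' by rewrite /r'; apply: epsilon_spec; exists r.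
rewrite -(@sum_supp F r' (undup (r' ++ r))) ?undup_uniq //; last first.
  by move=> s; rewrite mem_undup mem_cat => ->.
rewrite (@sum_supp F r (undup (r' ++ r))) ?undup_uniq //.
by move=> s; rewrite mem_undup mem_cat orbC => ->.
Qed.

Lemma supp_list_ext (F : S -> V) (W : nmodType) (G : S -> W) r :
  supp_list F r -> (forall s, F s = 0 -> G s = 0) -> supp_list G r.
Proof. by move=> [u z] H; split=> // s /z /H. Qed.

End Gen.

Section Gen2.
Variables (S : eqType) (V : nmodType).
Lemma finsupp_mask (F : S -> V) (P : S -> bool) :
  finsupp F -> finsupp (fun s => if P s then F s else 0).
Proof. by move=> [r Hr]; exists r; apply: (supp_list_ext Hr) => s ->; case: (P s). Qed.

Lemma fsum_morph (W : nmodType) (g : V -> W) (F : S -> V) :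
  g 0 = 0 -> (forall a b, g (a + b) = g a + g b) -> finsupp F ->
  fsum (fun s => g (F s)) = g (fsum F).
Proof.
move=> g0 gD [r Hr].
have Hr' : supp_list (fun s => g (F s)) r by apply: (supp_list_ext Hr) => s ->.
rewrite (fsumE Hr) (fsumE Hr').
by rewrite (big_morph g gD g0).
Qed.

Lemma finsupp_morph (W : nmodType) (g : V -> W) (F : S -> V) :
  g 0 = 0 -> finsupp F -> finsupp (fun s => g (F s)).
Proof. by move=> g0 [r Hr]; exists r; apply: (supp_list_ext Hr) => s ->. Qed.

Lemma push_morph (T : eqType) (W : nmodType) (g : V -> W) (f : S -> T) (F : S -> V) t :
  g 0 = 0 -> (forall a b, g (a + b) = g a + g b) -> finsupp F ->
  push f (fun s => g (F s)) t = g (push f F t).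
Proof.
move=> g0 gD HF; rewrite /push -fsum_morph //; last exact: finsupp_mask.
by congr fsum; apply: functional_extensionality => s; case: ifP.
Qed.

End Gen2.

Lemma fsum_unit (V : nmodType) (F : unit -> V) : fsum F = F tt.
Proof.
by rewrite (@fsumE _ _ F [:: tt]) ?big_seq1 //; split=> // -[]; rewrite mem_seq1 eqxx.
Qed.

Lemma sum_unit (V : nmodType) (F : unit -> V) : \sum_(i : unit) F i = F tt.
Proof. by rewrite (bigD1 tt) //= big1 ?addr0 // => -[]; rewrite eqxx. Qed.

Section Q.
Variable C : numClosedFieldType.
Local Notation L I := (Lop C I).

Lemma sum_unit_op (I : finType) (F : I -> I -> C) x y :
  \sum_a \sum_b @unit_op C I a b x y * F a b = F x y.
Proof.
rewrite (bigD1 x) //= [X in _ + X]big1 ?addr0; last first.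
  move=> a nax; apply: big1 => b _.
  by rewrite /unit_op eq_sym (negbTE nax) mul0r.
rewrite (bigD1 y) //= [X in _ + X]big1 ?addr0; last first.
  by move=> b nby; rewrite /unit_op eq_sym (negbTE nby) andbF mul0r.
by rewrite /unit_op !eqxx mul1r.
Qed.

Lemma tens_idE (k : nat) (J J' : finType) (f : L J -> L J') X p q :
  tens_map (fun Y : L 'I_k => Y) f X p q = f (block X p.1 q.1) p.2 q.2.
Proof. by rewrite /tens_map /kron sum_unit_op. Qed.

Lemma lin_unit (f : L unit -> L unit) : lin_op f ->
  forall A i j, f A i j = A tt tt * f (fun _ _ => 1) tt tt.
Proof.
move=> H.
have f0 : forall i j, f (fun _ _ => 0) i j = 0.
  have := H 1 (fun _ _ => 0) (fun _ _ => 0).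
  have -> : (fun i j : unit => 1 * (0:C) + 0) = (fun _ _ => 0).
    by apply: functional_extensionality => i; apply: functional_extensionality => j; rewrite mulr0 addr0.
  move=> E i j; have := congr1 (fun g => g i j) E => /= h; rewrite mul1r in h.
  by apply: (addrI (f (fun _ _ => 0) i j)); rewrite addr0 -h.
move=> A i j.
have -> : A = (fun i j => A tt tt * (fun _ _ => (1:C)) i j + (fun _ _ => 0) i j).
  by apply: functional_extensionality => -[]; apply: functional_extensionality => -[]; rewrite mulr1 addr0.
rewrite H f0 addr0 /=.
by case: i; case: j; rewrite mulr1 addr0.
Qed.

Lemma psd_ones (I : finType) : psd (fun _ _ : I => (1 : C)).
Proof.
move=> v.
have -> : \sum_i \sum_j (v i)^* * 1 * v j = (\sum_i v i)^* * (\sum_j v j).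
  rewrite rmorph_sum mulr_suml; apply: eq_bigr => i _.
  by rewrite mulr_sumr; apply: eq_bigr => j _; rewrite mulr1.
by rewrite mulrC mul_conjC_ge0.
Qed.

Lemma cp_unit_ge0 (f : L unit -> L unit) : is_cp f -> 0 <= f (fun _ _ => 1) tt tt.
Proof.
case=> _ cp.
have := cp 1%N (fun _ _ => 1) (@psd_ones _) (fun _ => 1).
have E : forall (i j : ('I_1 * unit)%type),
    (1:C)^* * tens_map (fun Y : L 'I_1 => Y) f (fun _ _ => 1) i j * 1 = f (fun _ _ => 1) tt tt.
  by move=> [a []] [b []]; rewrite tens_idE conjC1 mul1r mulr1.
under eq_bigr do under eq_bigr do rewrite E.
by rewrite sumr_const sumr_const card_prod card_ord card_unit /= !mulr1n.
Qed.

Lemma cp_scale (c : C) : 0 <= c -> is_cp (fun (A : L unit) i j => c * A i j).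
Proof.
move=> c0; split.
  move=> a X Y; apply: functional_extensionality => i; apply: functional_extensionality => j.
  by rewrite mulrDr mulrCA.
move=> k X HX v.
have -> : tens_map (fun Y : L 'I_k => Y) (fun (A : L unit) i j => c * A i j) X
    = (fun p q => c * X p q).
  apply: functional_extensionality => -[a []]; apply: functional_extensionality => -[b []].
  by rewrite tens_idE.
have -> : \sum_i \sum_j (v i)^* * (c * X i j) * v j =
          c * \sum_i \sum_j (v i)^* * X i j * v j.
  rewrite mulr_sumr; apply: eq_bigr => i _; rewrite mulr_sumr; apply: eq_bigr => j _.
  by rewrite mulrCA !mulrA.
exact: mulr_ge0.
Qed.

End Q.

Lemma Re_mulr (R : realType) (a b : R[i]) : complex.Im a = 0 ->
  complex.Re (a * b) = complex.Re a * complex.Re b.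
Proof. by case: a => a1 a2 /= ->; case: b => b1 b2 /=; rewrite mul0r subr0. Qed.

Lemma ge0_Im (R : realType) (c : R[i]) : 0 <= c -> complex.Im c = 0.
Proof. by rewrite lecE => /andP [/eqP -> _]. Qed.

Lemma ge0_Re (R : realType) (c : R[i]) : 0 <= c -> 0 <= complex.Re c.
Proof. by rewrite lecE => /andP [_]. Qed.

Theorem proposition6p5 (R : realType) :
  (* ---------- H(sInst) = Chan ---------- *)
  [/\ (* every channel gives a simplicial instrument Delta^0 -> CP_{V,W}(Delta^0) *)
      forall (V W : finType) (f : Lop R[i] V -> Lop R[i] W),
        is_channel f -> sinstr (const_sq f),
      (* every such instrument is the constant one at a channel *)
      forall (V W : finType) (Phi : sfam (Lop R[i] V -> Lop R[i] W) Delta0 Delta0),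
        sinstr Phi -> is_channel (ev Phi) /\ (forall n x y, Phi n x y = ev Phi),
      (* identities correspond *)
      forall (V : finType), ev (const_sq (fun A : Lop R[i] V => A)) = (fun A => A),
      (* horizontal composition corresponds to composition of channels *)
      forall (V W U : finType)
        (Phi : sfam (Lop R[i] V -> Lop R[i] W) Delta0 Delta0)
        (Psi : sfam (Lop R[i] W -> Lop R[i] U) Delta0 Delta0),
        sinstr Phi -> sinstr Psi -> ev2 (hcomp Phi Psi) = ev Psi \o ev Phi &
      (* vertical composition corresponds to the tensor product of channels *)
      forall (V1 W1 V2 W2 : finType)
        (Phi : sfam (Lop R[i] V1 -> Lop R[i] W1) Delta0 Delta0)
        (Psi : sfam (Lop R[i] V2 -> Lop R[i] W2) Delta0 Delta0),
        sinstr Phi -> sinstr Psi -> ev (vcomp Phi Psi) = tens_map (ev Phi) (ev Psi)]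
  /\
  (* ---------- V(sInst) = sSet_D ---------- *)
  [/\ [/\ (* every Kleisli map X -> D(Y) gives a simplicial instrument X -> CP_{C,C}(Y) *)
      forall (X Y : sSet) (p : sfam R X Y), kmap p -> sinstr (fromD p),
      (* every instrument X -> CP_{C,C}(Y) gives a Kleisli map, and is recovered *)
      forall (X Y : sSet) (Phi : sfam (Lop R[i] unit -> Lop R[i] unit) X Y),
        sinstr Phi -> kmap (toD Phi) /\ (forall n x y, fromD (toD Phi) n x y = Phi n x y)
      & forall (X Y : sSet) (p : sfam R X Y) n x y, toD (fromD p) n x y = p n x y],
      (* identities correspond *)
      forall (X : sSet) n x y, toD (vid X) n x y = kid R X n x y,
      (* vertical composition corresponds to Kleisli composition *)
      forall (X Y Z : sSet)
        (Phi : sfam (Lop R[i] unit -> Lop R[i] unit) X Y)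
        (Psi : sfam (Lop R[i] unit -> Lop R[i] unit) Y Z),
        sinstr Phi -> sinstr Psi ->
        forall n x z, toD2 (vcomp Phi Psi) n x z = kcomp (toD Phi) (toD Psi) n x z &
      (* horizontal composition corresponds to the product of simplicial sets *)
      forall (X1 Y1 X2 Y2 : sSet)
        (Phi : sfam (Lop R[i] unit -> Lop R[i] unit) X1 Y1)
        (Psi : sfam (Lop R[i] unit -> Lop R[i] unit) X2 Y2),
        sinstr Phi -> sinstr Psi ->
        forall n x y, toD (hcomp Phi Psi) n x y = ktens (toD Phi) (toD Psi) n x y].
Proof.
split.
{ split.
- move=> V W f [cpf chf]; split.
  + split.
    * by move=> n x; exists [:: tt]; split=> // -[]; rewrite mem_seq1.
    * move=> n i x _; apply: functional_extensionality => -[].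
      by rewrite /push fsum_unit.
    * move=> n i x _; apply: functional_extensionality => -[].
      by rewrite /push fsum_unit.
  + by move=> n x y.
  + by move=> n x; rewrite fsum_unit.
- move=> V W Phi [[fs fa dg] cp ch].
  have E : forall n, Phi n tt tt = Phi 0%N tt tt.
    elim=> // n IH; rewrite -IH.
    have := dg n 0%N tt (leq0n n).
    by move/(congr1 (fun g => g tt)); rewrite /push fsum_unit.
  split.
    by have := ch 0%N tt; rewrite fsum_unit.
  by move=> n [] []; exact: E.
- by [].
- by [].
- by move=> V1 W1 V2 W2 Phi Psi _ _; rewrite /ev /vcomp fsum_unit.
}
split; first split.
-
  move=> X Y p [[fs fa dg] p0 p1].
  pose g : R -> (Lop R[i] unit -> Lop R[i] unit) := fun c A i j => Complex c 0 * A i j.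
  have g0 : g 0 = 0.
    apply: functional_extensionality => A; apply: functional_extensionality => i;
    apply: functional_extensionality => j; exact: mul0r.
  have gD : forall a b, g (a + b) = g a + g b.
    move=> a b; apply: functional_extensionality => A; apply: functional_extensionality => i;
    apply: functional_extensionality => j.
    rewrite /g /= -mulrDl; congr (_ * _).
    by apply/eqP; rewrite eq_complex /= addr0 !eqxx.
  split.
  + split.
    * by move=> n x; have := finsupp_morph g0 (fs n x).
    * move=> n i x Hi; apply: functional_extensionality => y.
      change (g (p n (face X n i x) y) = push (face Y n i) (fun s => g (p n.+1 x s)) y).
      by rewrite push_morph // (fa n i x Hi).
    * move=> n i x Hi; apply: functional_extensionality => y.
      change (g (p n.+1 (degen X n i x) y) = push (degen Y n i) (fun s => g (p n x s)) y).
      by rewrite push_morph // (dg n i x Hi).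
  + move=> n x y; apply: (@cp_scale _ (Complex (p n x y) 0)).
    by rewrite lecE /= eqxx p0.
  + move=> n x.
    have -> : fsum (fromD p n x) = g 1.
      change (fsum (fun s => g (p n x s)) = g 1).
      by rewrite fsum_morph // p1.
    split.
      apply: (@cp_scale _ (Complex 1 0)).
      by rewrite lecE /= eqxx ler01.
    move=> X0; rewrite /trace; apply: eq_bigr => i _; exact: mul1r.
-
  move=> X Y Phi [[fs fa dg] cp ch].
  pose g : (Lop R[i] unit -> Lop R[i] unit) -> R := fun F => complex.Re (F (fun _ _ => 1) tt tt).
  have g0 : g 0 = 0 by reflexivity.
  have gD : forall a b : Lop R[i] unit -> Lop R[i] unit, g (a + b) = g a + g b.
    move=> a b; rewrite /g.
    change ((a + b) (fun _ _ => 1) tt tt) with (a (fun _ _ => 1) tt tt + b (fun _ _ => 1) tt tt).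
    by case: (a _ tt tt) => ? ?; case: (b _ tt tt).
  split.
  + split.
    * split.
      -- by move=> n x; have := finsupp_morph g0 (fs n x).
      -- move=> n i x Hi; apply: functional_extensionality => y.
         change (g (Phi n (face X n i x) y) = push (face Y n i) (fun s => g (Phi n.+1 x s)) y).
         by rewrite push_morph // (fa n i x Hi).
      -- move=> n i x Hi; apply: functional_extensionality => y.
         change (g (Phi n.+1 (degen X n i x) y) = push (degen Y n i) (fun s => g (Phi n x s)) y).
         by rewrite push_morph // (dg n i x Hi).
    * by move=> n x y; apply: ge0_Re; apply: cp_unit_ge0.
    * move=> n x.
      change (fsum (fun s => g (Phi n x s)) = 1).
      rewrite fsum_morph //.
      have [_ tr] := ch n x.
      have := tr (fun _ _ => 1); rewrite /trace !sum_unit /g => ->; by [].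
  + move=> n x y; apply: functional_extensionality => A;
    apply: functional_extensionality => -[]; apply: functional_extensionality => -[].
    rewrite /fromD /toD (lin_unit (proj1 (cp n x y)) A) mulrC; congr (_ * _).
    have := ge0_Im (cp_unit_ge0 (cp n x y)).
    by case: (Phi n x y _ tt tt) => a b /= ->.
- by move=> X Y p n x y; rewrite /toD /fromD Re_mulr /= ?mulr1.
- move=> X n x y; rewrite /toD /vid /kid; by case: (x == y).
- move=> X Y Z Phi Psi [[fsP _ _] cpP _] [[fsQ _ _] cpQ _] n x z.
  pose g : (Lop R[i] (unit * unit)%type -> Lop R[i] (unit * unit)%type) -> R :=
     fun F => complex.Re (F (fun _ _ => 1) (tt, tt) (tt, tt)).
  rewrite /toD2 /vcomp /kcomp.
  change (g (fsum (fun y => tens_map (Phi n x y) (Psi n y z))) =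
          fsum (fun y => toD Phi n x y * toD Psi n y z)).
  have g0 : g 0 = 0 by reflexivity.
  have gD : forall a b : Lop R[i] (unit * unit)%type -> Lop R[i] (unit * unit)%type,
      g (a + b) = g a + g b.
    move=> a b; rewrite /g.
    change ((a + b) (fun _ _ => 1) (tt, tt) (tt, tt)) with
      (a (fun _ _ => 1) (tt, tt) (tt, tt) + b (fun _ _ => 1) (tt, tt) (tt, tt)).
    by case: (a _ (tt, tt) (tt, tt)) => ? ?; case: (b _ (tt, tt) (tt, tt)).
  rewrite -(fsum_morph g0 gD); last first.
    have [r Hr] := fsP n x; exists r; apply: (supp_list_ext Hr) => y H0.
    rewrite H0; apply: functional_extensionality => A; apply: functional_extensionality => p;
    apply: functional_extensionality => q.
    apply: big1 => a _; apply: big1 => b _; exact: mul0r.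
  congr fsum; apply: functional_extensionality => y.
  rewrite /g /tens_map !sum_unit /kron /=.
  rewrite (lin_unit (proj1 (cpP n x y)) (@unit_op _ _ tt tt)) /unit_op /= mul1r.
  rewrite Re_mulr //; exact: ge0_Im (cp_unit_ge0 (cpP n x y)).
- move=> X1 Y1 X2 Y2 Phi Psi [_ cpP _] [_ cpQ _] n x y.
  rewrite /toD /hcomp /= (lin_unit (proj1 (cpQ n x.2 y.2))).
  rewrite Re_mulr //; exact: ge0_Im (cp_unit_ge0 (cpP _ _ _)).
Qed.
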